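(* Let $\mathbf C$ be an admissible category of lattices and $X$ a convergence space. The map $\eta_X:X\to\mathrm{pt}(\mathbb P X)$, sending $x$ to the point $S\mapsto 1$ if $x\in S$ and $S\mapsto\emptyset$ otherwise, is injective and initial, i.e. for every filter $\mathcal F$ of subsets of $X$ and every $x\in X$, $\mathcal F\to x$ in $X$ if and only if $\eta_X[\mathcal F]\to\eta_X(x)$ in $\mathrm{pt}(\mathbb P X)$. Moreover, $\eta_X$ is an isomorphism of convergence spaces if $\mathbf C$ is an admissible category of frames or an admissible category of coframes.
   Context: A filter on an inf-semilattice $L$ is a non-empty upward-closed subset closed under binary meets ($L$ itself allowed); $\mathbb F L$ is the set of filters. $\mathbb P(X)$ is the powerset of $X$. A category of lattices has lattices as objects and lattice morphisms (preserving finite suprema and infima) as morphisms; it is admissible if every $\mathbb P(X)$ is an object and there are classes of index sets $\mathcal I,\mathcal J$ such that morphisms $L\to L'$ are exactly monotone maps preserving all existing $I$-indexed infima ($I\in\mathcal I$) and $J$-indexed suprema ($J\in\mathcal J$). Categories of frames/coframes (with frame/coframe morphisms) are understood analogously. A convergence $\mathbf C$-object is $(L,\lim_L)$ with $\lim_L:\mathbb F L\to L$ monotone; morphisms $\varphi:L\to L'$ in $\mathbf C^{\mathrm{conv}}$ are $\mathbf C$-morphisms with $\lim_{L'}\mathcal F\le\varphi(\lim_L\varphi^{-1}(\mathcal F))$. A convergence space is a set $X$ with a relation $\to$ between filters of subsets and points such that $\dot x=\{S:x\in S\}\to x$ and convergence is preserved by enlarging the filter. For $f:X\to Y$, $f[\mathcal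 F]=\{B\subseteq Y:f^{-1}(B)\in\mathcal F\}$. $\mathbb P X$ denotes the convergence $\mathbf C$-object $(\mathbb P(X),\lim)$ with $\lim\mathcal F=\{x:\mathcal F\to x\}$. With $1=\{*\}$, $\mathbb P(1)=\{\emptyset,1\}$ and $\lim_{\mathbb P(1)}$ constantly $1$, the points of a convergence $\mathbf C$-object $L$ are the $\mathbf C^{\mathrm{conv}}$-morphisms $L\to\mathbb P(1)$; $\mathrm{pt}\,L$ is the set of points, $\ell^\bullet=\{\varphi\in\mathrm{pt}\,L:\varphi(\ell)=1\}$, $\mathcal F^\circ=\{\ell:\ell^\bullet\in\mathcal F\}$ for filters $\mathcal F$ of subsets of $\mathrm{pt}\,L$, and $\mathcal F\to\varphi$ in $\mathrm{pt}\,L$ iff $\varphi\in(\lim_L\mathcal F^\circ)^\bullet$. *)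

(* Defs.v *)
From mathcomp Require Import all_boot.
From mathcomp Require Import boolp classical_sets.
Set Implicit Arguments.
Unset Strict Implicit.
Unset Printing Implicit Defensive.
Local Open Scope classical_set_scope.

(** Filters on the powerset lattice P(X): non-empty, upward closed, closed
    under binary meets.  The improper filter P(X) is allowed. *)
Definition is_filter {X : Type} (F : set (set X)) : Prop :=
  (exists S, F S) /\
  (forall S T : set X, F S -> S `<=` T -> F T) /\
  (forall S T : set X, F S -> F T -> F (S `&` T)).

Definition principal {X : Type} (x : X) : set (set X) := [set S | S x].

Definition fmap {X Y : Type} (f : X -> Y) (F : set (set X)) : set (set Y) :=
  [set B | F (f @^-1` B)].

Definition is_conv_space {X : Type} (conv : set (set X) -> X -> Prop) : Prop :=
  (forall x, conv (principal x) x) /\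
  (forall (F G : set (set X)) x,
      is_filter F -> is_filter G -> F `<=` G -> conv F x -> conv G x).

Definition continuous_conv {X Y : Type} (cX : set (set X) -> X -> Prop)
  (cY : set (set Y) -> Y -> Prop) (f : X -> Y) : Prop :=
  forall F x, is_filter F -> cX F x -> cY (fmap f F) (f x).

Definition conv_iso {X Y : Type} (cX : set (set X) -> X -> Prop)
  (cY : set (set Y) -> Y -> Prop) (f : X -> Y) : Prop :=
  exists g : Y -> X, cancel f g /\ cancel g f /\
    continuous_conv cX cY f /\ continuous_conv cY cX g.

(** Morphisms of an admissible category C, given by classes I, J of index
    sets, between powerset objects P(A) -> P(B): monotone maps preserving all
    I-indexed infima and all J-indexed suprema (all of which exist in P(A)). *)
Definition cmor (I J : Type -> Prop) {A B : Type} (phi : set A -> set B) : Prop :=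
  (forall S T : set A, S `<=` T -> phi S `<=` phi T) /\
  (forall (K : Type) (f : K -> set A), I K ->
      phi (\bigcap_(k in setT) f k) = \bigcap_(k in setT) phi (f k)) /\
  (forall (K : Type) (f : K -> set A), J K ->
      phi (\bigcup_(k in setT) f k) = \bigcup_(k in setT) phi (f k)).

Definition lattice_mor {A B : Type} (phi : set A -> set B) : Prop :=
  phi set0 = set0 /\ phi setT = setT /\
  (forall S T, phi (S `|` T) = phi S `|` phi T) /\
  (forall S T, phi (S `&` T) = phi S `&` phi T).

Definition frame_mor {A B : Type} (phi : set A -> set B) : Prop :=
  phi setT = setT /\
  (forall S T, phi (S `&` T) = phi S `&` phi T) /\
  (forall (K : Type) (f : K -> set A),
      phi (\bigcup_(k in setT) f k) = \bigcup_(k in setT) phi (f k)).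

Definition coframe_mor {A B : Type} (phi : set A -> set B) : Prop :=
  phi set0 = set0 /\
  (forall S T, phi (S `|` T) = phi S `|` phi T) /\
  (forall (K : Type) (f : K -> set A),
      phi (\bigcap_(k in setT) f k) = \bigcap_(k in setT) phi (f k)).

(** (I, J) determine an admissible category of lattices / frames / coframes:
    the powersets are objects and the maps between them described by (I, J)
    are lattice (resp. frame, coframe) morphisms.  (The category whose objects
    are exactly the powersets is then admissible; only powerset objects occur
    in the theorem.) *)
Definition admissible_lat (I J : Type -> Prop) : Prop :=
  forall (A B : Type) (phi : set A -> set B), cmor I J phi -> lattice_mor phi.
Definition admissible_frm (I J : Type -> Prop) : Prop :=
  forall (A B : Type) (phi : set A -> set B), cmor I J phi -> frame_mor phi.
Definition admissible_cofrm (I J : Type -> Prop) : Prop :=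
  forall (A B : Type) (phi : set A -> set B), cmor I J phi -> coframe_mor phi.

Definition conv_mor (I J : Type -> Prop) {A B : Type}
  (limA : set (set A) -> set A) (limB : set (set B) -> set B)
  (phi : set A -> set B) : Prop :=
  cmor I J phi /\
  forall G : set (set B), is_filter G -> limB G `<=` phi (limA (phi @^-1` G)).

Definition lim_P {X : Type} (conv : set (set X) -> X -> Prop)
  (F : set (set X)) : set X := [set x | conv F x].

Definition lim_P1 (G : set (set unit)) : set unit := setT.

Definition is_point (I J : Type -> Prop) {X : Type}
  (conv : set (set X) -> X -> Prop) (phi : set X -> set unit) : Prop :=
  conv_mor I J (lim_P conv) lim_P1 phi.

Record pt (I J : Type -> Prop) (X : Type) (conv : set (set X) -> X -> Prop) :=
  Pt { ptval :> set X -> set unit; ptP : is_point I J conv ptval }.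

Section PtConv.
Variables (I J : Type -> Prop) (X : Type) (conv : set (set X) -> X -> Prop).

Definition bul (S : set X) : set (pt I J conv) := [set p | ptval p S = setT].
Definition circ (F : set (set (pt I J conv))) : set (set X) := [set S | F (bul S)].
Definition pt_conv (F : set (set (pt I J conv))) (p : pt I J conv) : Prop :=
  bul (lim_P conv (circ F)) p.
End PtConv.

Definition eta_fun {X : Type} (x : X) (S : set X) : set unit := [set _ : unit | S x].

Lemma eta_point (I J : Type -> Prop) (X : Type) (conv : set (set X) -> X -> Prop)
  (Hc : is_conv_space conv) (x : X) : is_point I J conv (eta_fun x).
Proof.
split.
  split; first by move=> S T ST u /= /ST.
  by split=> K f _; apply/seteqP; split=> u /=.
move=> G [[S0 GS0] [Gup Gmeet]] u _ /=.
have GT : G setT by apply: (Gup S0).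
case: Hc => Hdot Hup; apply: (Hup (principal x)) => //.
- split; first by exists setT.
  by split=> [S T /= Sx ST|S T /= ? ?]; [apply: ST|split].
- split.
    by exists setT; apply: (Gup setT).
  split=> [S T /= GS ST|S T /= GS GT'].
    by apply: Gup GS _ => v /=; apply: ST.
  by apply: Gup (Gmeet _ _ GS GT') _ => v [].
- move=> S /= Sx.
  by apply: (Gup setT).
Qed.

Definition eta (I J : Type -> Prop) {X : Type} {conv : set (set X) -> X -> Prop}
  (Hc : is_conv_space conv) (x : X) : pt I J conv :=
  @Pt I J X conv (eta_fun x) (eta_point I J Hc x).

(* Main.v *)
Require Import Defs.
From mathcomp Require Import all_boot.
From mathcomp Require Import boolp classical_sets.
Set Implicit Arguments.
Unset Strict Implicit.
Local Open Scope classical_set_scope.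

Lemma unitT (u : set unit) : u tt -> u = setT.
Proof. by move=> h; apply/seteqP; split=> // -[]. Qed.

Lemma eta_funT (X : Type) (x : X) S : eta_fun x S = setT <-> S x.
Proof.
split=> [h|h]; last by apply: unitT.
by have : (setT : set unit) tt by []; rewrite -h.
Qed.

Lemma eq_eta (X : Type) (p : set X -> set unit) x :
  (forall S, p S tt <-> S x) -> p = eta_fun x.
Proof.
move=> h; apply: funext => S; apply/seteqP; split=> -[] /=; by move/h.
Qed.

Lemma frame_eta (X : Type) (p : set X -> set unit) :
  frame_mor p -> exists x, p = eta_fun x.
Proof.
move=> [pT [pI pU]].
have p0 : p set0 = set0.
  have e : (set0 : set X) = \bigcup_(k in setT) (fun _ : void => set0) k.
    by apply/seteqP; split=> // y [[]].
  rewrite e pU; apply/seteqP; split=> // y [[]].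
have e : (setT : set X) = \bigcup_(k in setT) (fun y : X => [set y]) k.
  by apply/seteqP; split=> // y _; exists y.
have : p setT tt by rewrite pT.
rewrite e pU => -[x _ px]; exists x; apply: eq_eta => S; split=> h.
  apply: contrapT => nS.
  have : p (S `&` [set x]) tt by rewrite pI.
  have -> : S `&` [set x] = set0 by apply/seteqP; split=> [y [Sy ey]|//]; apply: nS; rewrite -ey.
  by rewrite p0.
have e2 : [set x] = [set x] `&` S by apply/seteqP; split=> [y ->|y []] //; split.
by move: px; rewrite e2 pI => -[].
Qed.

Lemma coframe_eta (X : Type) (p : set X -> set unit) :
  coframe_mor p -> exists x, p = eta_fun x.
Proof.
move=> [p0 [pU pI]].
have mono S U : S `<=` U -> p S tt -> p U tt.
  move=> SU h; have -> : U = S `|` U by apply/seteqP; split=> [y|y [/SU|]]; [right| |].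
  by rewrite pU; left.
pose T := \bigcap_(k in setT) (@proj1_sig (set X) (fun S => p S tt)) k.
have pT : p T tt by rewrite /T pI => -[S h] _.
have [x Tx] : exists x, T x.
  apply: contrapT => nx; move: pT.
  have -> : T = set0 by apply/seteqP; split=> // y Ty; apply: nx; exists y.
  by rewrite p0.
have pTT : p setT tt.
  have e : (setT : set X) = \bigcap_(k in setT) (fun _ : void => set0) k.
    by apply/seteqP; split=> // y _ [].
  by rewrite e pI => -[].
exists x; apply: eq_eta => S; split=> [h|Sx].
  exact: (Tx (exist _ S h)).
have : p (S `|` ~` S) tt.
  by have -> : S `|` ~` S = setT by apply/seteqP; split=> // y _; apply: lem.
rewrite pU => -[//|h].
by have := Tx (exist _ _ h) I.
Qed.

Lemma pt_ext I J X conv (p q : @pt I J X conv) : ptval p = ptval q -> p = q.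
Proof.
case: p q => f fP [g gP] /= e; subst g; congr Pt; exact: Prop_irrelevance.
Qed.

Lemma pre_bul I J X conv (g : @pt I J X conv -> X)
  (hg : forall p, ptval p = eta_fun (g p)) S : bul S = g @^-1` S.
Proof.
apply: funext => p; apply: propext; rewrite /bul /= hg; exact: eta_funT.
Qed.

Lemma eta_pre I J X conv (Hc : is_conv_space conv) S :
  (@eta I J X conv Hc) @^-1` bul S = S.
Proof.
apply: funext => y; apply: propext; rewrite /bul /=; exact: eta_funT.
Qed.

Lemma conv_eta I J X conv (Hc : is_conv_space conv) F x :
  conv F x <-> pt_conv (fmap (@eta I J X conv Hc) F) (eta I J Hc x).
Proof.
rewrite /pt_conv /bul /=.
have -> : circ (fmap (eta I J Hc) F) = F.
  by apply: funext => S; rewrite /circ /fmap /= eta_pre.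
by rewrite eta_funT.
Qed.

Theorem mainTheorem3 :
  (forall (I J : Type -> Prop), admissible_lat I J ->
   forall (X : Type) (conv : set (set X) -> X -> Prop) (Hc : is_conv_space conv),
     injective (eta I J Hc) /\
     (forall (F : set (set X)) (x : X), is_filter F ->
        (conv F x <-> pt_conv (fmap (eta I J Hc) F) (eta I J Hc x)))) /\
  (forall (I J : Type -> Prop), admissible_frm I J \/ admissible_cofrm I J ->
   forall (X : Type) (conv : set (set X) -> X -> Prop) (Hc : is_conv_space conv),
     conv_iso conv (@pt_conv I J X conv) (eta I J Hc)).
Proof.
have inj I J X conv (Hc : is_conv_space conv) : injective (@eta I J X conv Hc).
  move=> x y /(congr1 (fun p => ptval p [set x])) /= e.
  have : eta_fun y [set x] = setT by rewrite -e; apply/eta_funT.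
  by move/eta_funT.
split=> [I J _ X conv Hc|I J adm X conv Hc].
  by split=> [|F x _]; [exact: inj|exact: conv_eta].
have ex (p : pt I J conv) : exists x, ptval p = eta_fun x.
  case: (ptP p) => hm _.
  case: adm => [a|a]; [exact: frame_eta (a _ _ _ hm)|exact: coframe_eta (a _ _ _ hm)].
pose g p := projT1 (cid (ex p)).
have hg p : ptval p = eta_fun (g p) by rewrite /g; case: cid.
exists g; split.
  by move=> x; apply: (inj I J X conv Hc); apply: pt_ext; rewrite /= -hg.
split; first by move=> p; apply: pt_ext; rewrite /= -hg.
split; first by move=> F x _; exact/(proj1 (conv_eta I J Hc F x)).
move=> G p _; rewrite /pt_conv /bul /= hg eta_funT /lim_P /=.
have -> : circ G = fmap g G.
  by apply: funext => S; rewrite /circ /fmap /= (pre_bul hg).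
by [].
Qed.
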